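(* Let $\Gamma$ be a finite connected cubic graph, let $\alpha$ be a vertex of $\Gamma$, let $G$ be a vertex-transitive subgroup of $\mathrm{Aut}(\Gamma)$ and let $N$ be a normal subgroup of $G$ acting semiregularly on $V\Gamma$. Suppose that the vertex stabilizer $G_\alpha$ is a non-identity $2$-group and that the normal quotient $\Gamma/N$ is a cycle of length $r\ge 3$. Let $K$ be the kernel of the action of $G$ on the set of $N$-orbits on $V\Gamma$. Then either (1) $|G_\alpha|=2$ and $K_\alpha=1$, or (2) $r$ is even and $G_\alpha=K_\alpha$ is an elementary abelian $2$-group of order at most $2^{r/2}$.
   Context: For $N\le\mathrm{Aut}(\Gamma)$, the normal quotient $\Gamma/N$ is the graph whose vertices are the $N$-orbits on $V\Gamma$, two distinct orbits being adjacent if some edge of $\Gamma$ joins a vertex of one to a vertex of the other. A cycle is a connected graph in which every vertex has valency $2$. $G_\alpha$ and $K_\alpha$ denote the stabilizers of $\alpha$ in $G$ and $K$. *)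

(* Defs.v *)
From mathcomp Require Import all_boot all_fingroup all_solvable.
Set Implicit Arguments. Unset Strict Implicit. Unset Printing Implicit Defensive.
Local Open Scope group_scope.

Definition simple_graph (V : finType) (e : rel V) : Prop :=
  irreflexive e /\ symmetric e.

Definition graph_connected (V : finType) (e : rel V) : Prop :=
  forall x y : V, connect e x y.

Definition cubic (V : finType) (e : rel V) : Prop :=
  forall x : V, #|[set y | e x y]| = 3.

Definition Aut_graph (V : finType) (e : rel V) : {set {perm V}} :=
  [set g : {perm V} | [forall x, forall y, e (g x) (g y) == e x y]].

Definition orbs (V : finType) (N : {set {perm V}}) : {set {set V}} :=
  [set orbit 'P N x | x : V].

Definition quot_adj (V : finType) (e : rel V) (N : {set {perm V}}) : rel {set V} :=
  fun B C => [&& B \in orbs N, C \in orbs N, B != C &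
                 [exists x in B, exists y in C, e x y]].

Definition quotient_is_cycle (V : finType) (e : rel V) (N : {set {perm V}}) (r : nat)
  : Prop :=
  [/\ #|orbs N| = r,
      (forall B C, B \in orbs N -> C \in orbs N -> connect (quot_adj e N) B C) &
      (forall B, B \in orbs N -> #|[set C | quot_adj e N B C]| = 2)].

Definition orbit_kernel (V : finType) (G N : {set {perm V}}) : {set {perm V}} :=
  'C_G(orbs N | ('P^*)%act).

(* Main.v *)
Require Import Defs.
From mathcomp Require Import all_boot all_fingroup all_solvable.
From mathcomp Require Import zify.
Set Implicit Arguments. Unset Strict Implicit. Unset Printing Implicit Defensive.
Local Open Scope group_scope.

Lemma setactP_img (V : finType) (g : {perm V}) (B : {set V}) :
  ('P^*)%act B g = g @: B.
Proof. by []. Qed.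

Lemma two_elems (T : finType) (S : {set T}) a b c :
  #|S| = 2 -> a \in S -> b \in S -> a != b -> c \in S -> (c == a) || (c == b).
Proof.
move=> HS Ha Hb Hab Hc.
have: [set a; b] == S.
  rewrite eqEcard HS cards2 Hab andbT.
  by apply/subsetP => z; rewrite !inE => /orP[]/eqP->.
by move/eqP=> E; move: Hc; rewrite -E !inE.
Qed.

Lemma two_fix (T : finType) (S : {set T}) (f : T -> T) X :
  #|S| = 2 -> X \in S -> f X = X -> {in S, forall Y, f Y \in S} ->
  injective f -> {in S, forall Y, f Y = Y}.
Proof.
move=> HS HX fX fS finj Y HY.
case: (eqVneq Y X) => [->//|nYX].
have nXY : X != Y by rewrite eq_sym.
case/orP: (two_elems HS HX HY nXY (fS Y HY)) => /eqP // E.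
by rewrite -fX in E; move/finj: E => E; rewrite E eqxx in nYX.
Qed.

Lemma le1_eq (T : finType) (A : {set T}) x y :
  #|A| <= 1 -> x \in A -> y \in A -> x = y.
Proof. by move/card_le1_eqP => H Hx Hy; apply: H. Qed.
Section Basics.
Variables (V : finType) (e : rel V) (G N : {group {perm V}}).
Hypotheses (He : simple_graph e) (HGA : G \subset Aut_graph e) (HN : N <| G)
  (Hsr : forall x : V, 'C_N[x | 'P] = 1).

Local Notation Ob x := (orbit 'P N x).
Definition nb (x : V) (C : {set V}) := [set y in C | e x y].

Lemma e_sym x y : e x y = e y x.
Proof. by case: He => _ /(_ x y). Qed.

Lemma eirr x : e x x = false.
Proof. by case: He => /(_ x). Qed.

Lemma e_aut g x y : g \in G -> e (g x) (g y) = e x y.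
Proof.
move=> Hg; have := subsetP HGA g Hg; rewrite inE => /forallP/(_ x)/forallP/(_ y)/eqP.
done.
Qed.

Lemma sNG : N \subset G.
Proof. by case/andP: HN. Qed.

Lemma NinG n : n \in N -> n \in G.
Proof. exact: (subsetP sNG). Qed.

Lemma conjN n g : n \in N -> g \in G -> n ^ g \in N.
Proof.
move=> Hn Hg; case/andP: HN => _ nNG.
by rewrite memJ_norm // (subsetP nNG).
Qed.

Lemma orb_mem x y g : y \in Ob x -> g \in G -> g y \in Ob (g x).
Proof.
move=> /orbitP [n Hn <-] Hg; apply/orbitP; exists (n ^ g); first exact: conjN.
by rewrite /= !apermE permJ.
Qed.

Lemma orbN x n : n \in N -> n x \in Ob x.
Proof. by move=> Hn; apply/orbitP; exists n. Qed.

Lemma orb_self x : x \in Ob x.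
Proof. exact: orbit_refl. Qed.

Lemma card_orb x : #|Ob x| = #|N|.
Proof. by rewrite card_orbit Hsr indexg1. Qed.

Lemma orb_img g x : g \in G -> g @: Ob x = Ob (g x).
Proof.
move=> Hg; apply/eqP; rewrite eqEcard card_imset; last exact: perm_inj.
rewrite !card_orb leqnn andbT.
apply/subsetP => z /imsetP [y Hy ->]; exact: orb_mem.
Qed.

Lemma orb_eq x y : y \in Ob x -> Ob y = Ob x.
Proof. by move/orbit_eqP. Qed.

Lemma orbsP (B : {set V}) : reflect (exists x, B = Ob x) (B \in orbs N).
Proof.
apply: (iffP imsetP) => [[x _ ->]|[x ->]]; by exists x.
Qed.

Lemma orbs_Ob x : Ob x \in orbs N.
Proof. by apply/orbsP; exists x. Qed.

Lemma orbs_eq (B : {set V}) x : B \in orbs N -> x \in B -> B = Ob x.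
Proof. by case/orbsP => b -> Hx; rewrite (orb_eq Hx). Qed.

Lemma orbs_img g (B : {set V}) : g \in G -> B \in orbs N -> g @: B \in orbs N.
Proof. by move=> Hg /orbsP [b ->]; rewrite orb_img //; apply: orbs_Ob. Qed.

Lemma orbs_N n (B : {set V}) : n \in N -> B \in orbs N -> n @: B = B.
Proof.
move=> Hn /orbsP [b ->]; rewrite orb_img ?NinG //; exact/orb_eq/orbN.
Qed.

Lemma orbs_memN n (B : {set V}) x : n \in N -> B \in orbs N -> (n x \in B) = (x \in B).
Proof.
move=> Hn HB; rewrite -{1}(orbs_N Hn HB); apply: mem_imset; exact: perm_inj.
Qed.

Lemma nb_img g x (C : {set V}) : g \in G -> nb (g x) (g @: C) = g @: nb x C.
Proof.
move=> Hg; apply/setP => z; rewrite !inE.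
apply/andP/imsetP => [[/imsetP [y Hy ->] He']|[y]].
  by exists y => //; rewrite inE Hy -(e_aut x y Hg) He'.
by rewrite inE => /andP [Hy He'] ->; rewrite mem_imset ?(e_aut _ _ Hg) //; exact: perm_inj.
Qed.

Lemma cnt_img g x (C : {set V}) : g \in G -> #|nb (g x) (g @: C)| = #|nb x C|.
Proof. by move=> Hg; rewrite nb_img // card_imset //; exact: perm_inj. Qed.

Lemma cnt_orb x y (C : {set V}) : C \in orbs N -> y \in Ob x -> #|nb y C| = #|nb x C|.
Proof.
move=> HC /orbitP [n Hn <-]; rewrite -{1}(orbs_N Hn HC) cnt_img //.
exact: NinG.
Qed.

Lemma semireg n m z : n \in N -> m \in N -> n z = m z -> n = m.
Proof.
move=> Hn Hm E; apply/eqP; rewrite eq_mulgV1.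
have: n * m^-1 \in 'C_N[z | 'P].
  rewrite inE groupM ?groupV //=; apply/astab1P; rewrite /= apermE permM E -permM mulgV perm1 //.
by rewrite Hsr inE.
Qed.

Variable r : nat.
Hypothesis Hcyc : quotient_is_cycle e N r.
Hypothesis Hconn : graph_connected e.
Hypothesis Hcub : cubic e.

Local Notation adj := (quot_adj e N).

Lemma adj_symI (B C : {set V}) : adj B C -> adj C B.
Proof.
move=> /and4P [HB HC HBC /existsP [x /andP [Hx /existsP [y /andP [Hy Hxy]]]]].
apply/and4P; split => //; first by rewrite eq_sym.
apply/existsP; exists y; rewrite Hy /=; apply/existsP; exists x; by rewrite Hx e_sym.
Qed.

Lemma adj_img g (B C : {set V}) : g \in G -> adj B C -> adj (g @: B) (g @: C).
Proof.
move=> Hg /and4P [HB HC HBC /existsP [x /andP [Hx /existsP [y /andP [Hy Hxy]]]]].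
apply/and4P; split; try exact: orbs_img.
  by rewrite (inj_eq (imset_inj (@perm_inj _ g))).
apply/existsP; exists (g x); rewrite mem_imset ?Hx /=; last exact: perm_inj.
apply/existsP; exists (g y); rewrite mem_imset ?Hy /=; last exact: perm_inj.
by rewrite e_aut.
Qed.

Lemma adj_cnt x (C : {set V}) : adj (Ob x) C -> 0 < #|nb x C|.
Proof.
move=> /and4P [_ HC _ /existsP [y /andP [Hy /existsP [z /andP [Hz Hyz]]]]].
case/orbitP: Hy => n Hn; rewrite /= apermE => Ey.
apply/card_gt0P; exists (n^-1 z); rewrite inE.
rewrite -(orbs_memN (n:=n)) ?permKV ?Hz //=.
by rewrite -(e_aut _ _ (NinG Hn)) permKV Ey.
Qed.

Lemma adj_of_cnt x (C : {set V}) : C \in orbs N -> C != Ob x -> 0 < #|nb x C| -> adj (Ob x) C.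
Proof.
move=> HC ne /card_gt0P [y]; rewrite inE => /andP [Hy Hxy].
apply/and4P; split => //; first exact: orbs_Ob.
  by rewrite eq_sym.
apply/existsP; exists x; rewrite orb_self /=; apply/existsP; exists y; by rewrite Hy.
Qed.

Lemma nbr_orb x y : e x y -> Ob y = Ob x \/ adj (Ob x) (Ob y).
Proof.
move=> Hxy; case: (eqVneq (Ob y) (Ob x)) => [->|ne]; [by left|right].
apply: adj_of_cnt => //; first exact: orbs_Ob.
by apply/card_gt0P; exists y; rewrite inE orb_self.
Qed.

Lemma nb_disj x (B C : {set V}) : B \in orbs N -> C \in orbs N -> B != C ->
  nb x B :&: nb x C = set0.
Proof.
move=> HB HC ne; apply/setP => y; rewrite !inE; apply/negP => /andP[/andP [HyB _] /andP [HyC _]].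
by rewrite (orbs_eq HB HyB) (orbs_eq HC HyC) eqxx in ne.
Qed.

Lemma adj2 B : B \in orbs N -> #|[set C | adj B C]| = 2.
Proof. by case: Hcyc => _ _ H2 HB; apply: H2. Qed.

Lemma local x : exists C1 C2, [/\ C1 \in orbs N, C2 \in orbs N, C1 != C2,
  C1 != Ob x & C2 != Ob x] /\ [/\
  #|nb x (Ob x)| + #|nb x C1| + #|nb x C2| = 3,
  0 < #|nb x C1|, 0 < #|nb x C2| &
  forall C, C \in orbs N -> C != Ob x -> C != C1 -> C != C2 -> #|nb x C| = 0].
Proof.
have := adj2 (orbs_Ob x); move/eqP/cards2P => [C1 [C2 [ne ES]]].
have A1 : adj (Ob x) C1.
  have: C1 \in [set C | adj (Ob x) C] by rewrite ES !inE eqxx.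
  by rewrite inE.
have A2 : adj (Ob x) C2.
  have: C2 \in [set C | adj (Ob x) C] by rewrite ES !inE eqxx orbT.
  by rewrite inE.
have HC1 : C1 \in orbs N by case/and4P: A1.
have HC2 : C2 \in orbs N by case/and4P: A2.
have n1 : C1 != Ob x by case/and4P: A1 => _ _; rewrite eq_sym.
have n2 : C2 != Ob x by case/and4P: A2 => _ _; rewrite eq_sym.
exists C1, C2; split; first by split.
split; try exact: adj_cnt.
- have E : [set y | e x y] = nb x (Ob x) :|: nb x C1 :|: nb x C2.
    apply/setP => y; rewrite !inE.
    case Hxy: (e x y); rewrite ?andbF //= !andbT.
    case: (nbr_orb Hxy) => [<-|A]; first by rewrite orb_self.
    have: Ob y \in [set C | adj (Ob x) C] by rewrite inE.
    by rewrite ES !inE => /orP [] /eqP <-; rewrite orb_self ?orbT.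
  have m1 : Ob x != C1 by rewrite eq_sym.
  have m2 : Ob x != C2 by rewrite eq_sym.
  have := Hcub x; rewrite E cardsU setIUl !nb_disj ?orbs_Ob //.
  by rewrite setU0 cards0 subn0 cardsU nb_disj ?orbs_Ob // cards0 subn0.
- move=> C HC nx n1' n2'; apply/eqP; rewrite cards_eq0; apply/eqP; apply/setP => y.
  rewrite !inE; apply/negP => /andP [Hy Hxy].
  have E0 := orbs_eq HC Hy.
  case: (nbr_orb Hxy) => [E|A].
    by rewrite E0 E eqxx in nx.
  have: C \in [set C | adj (Ob x) C] by rewrite inE E0.
  by rewrite ES !inE (negbTE n1') (negbTE n2').
Qed.

Lemma propag g B : g \in G -> B \in orbs N -> g @: B = B ->
  (forall C, adj B C -> g @: C = C) -> forall C, C \in orbs N -> g @: C = C.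
Proof.
move=> Hg HB gB gN C HC.
pose P (X : {set V}) := g @: X = X /\ (forall Y, adj X Y -> g @: Y = Y).
have step (X Y : {set V}) : P X -> adj X Y -> P Y.
  move=> [gX gXN] AXY; have gY := gXN Y AXY; split => // Z AYZ.
  have HY : Y \in orbs N by case/and4P: AXY.
  have := @two_fix _ [set Z | adj Y Z] (fun Z => g @: Z) X (adj2 HY).
  move/(_ _ gX) => H.
  have := H _ _ _ Z; rewrite !inE; apply => //.
  - exact: adj_symI.
  - by move=> W; rewrite !inE => AW; rewrite -{1}gY; apply: adj_img.
  - exact: (imset_inj (@perm_inj _ g)).
case: Hcyc => _ Hc _.
have /connectP [p pth ->] := Hc _ _ HB HC.
suff : P (last B p) by case.
elim: p B HB gB gN pth {Hc HC} => [|Y p IH] X HX gX gXN /=; first by split.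
case/andP => AXY pth; apply: IH => //.
- by case/and4P: AXY.
- by case: (step X Y (conj gX gXN) AXY).
- by case: (step X Y (conj gX gXN) AXY).
Qed.

Lemma inK g : reflect (g \in G /\ forall B, B \in orbs N -> g @: B = B)
  (g \in orbit_kernel G N).
Proof.
rewrite /orbit_kernel inE; apply: (iffP andP) => [[Hg /astabP H]|[Hg H]].
  by split => // B HB; apply: H.
by split => //; apply/astabP => B HB; apply: H.
Qed.

Lemma inStab (H : {set {perm V}}) x g : reflect (g \in H /\ g x = x) (g \in 'C_H[x | 'P]).
Proof.
rewrite inE; apply: (iffP andP) => [[Hg /astab1P E]|[Hg E]]; split => //.
by apply/astab1P.
Qed.

Lemma K_G g : g \in orbit_kernel G N -> g \in G.
Proof. by case/inK. Qed.

Lemma K_orb g x : g \in orbit_kernel G N -> g x \in Ob x.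
Proof.
case/inK => Hg H; rewrite -(H _ (orbs_Ob x)) mem_imset ?orb_self //; exact: perm_inj.
Qed.

Lemma K_mem g (B : {set V}) x : g \in orbit_kernel G N -> B \in orbs N -> (g x \in B) = (x \in B).
Proof.
case/inK => Hg H HB; rewrite -{1}(H _ HB) mem_imset //; exact: perm_inj.
Qed.

Lemma fixall (k : {perm V}) a : (forall x y, k x = x -> e x y -> k y = y) -> k a = a -> k = 1.
Proof.
move=> H Ha.
have cl : closed e [pred x | k x == x].
  move=> x y Hxy /=; apply/eqP/eqP => E; first exact: H Hxy.
  by apply: (H y) => //; rewrite e_sym.
apply/permP => v; rewrite perm1.
have := closed_connect cl (Hconn a v); rewrite !inE /= Ha eqxx.
by move/esym/eqP.
Qed.

Hypothesis Htr : [transitive G, on [set: V] | 'P].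

Lemma cnt_self x y : #|nb x (Ob x)| = #|nb y (Ob y)|.
Proof.
have [g Hg ->] := atransP2 Htr (in_setT x) (in_setT y).
by rewrite /= -orb_img // cnt_img.
Qed.

Lemma imsetM (g h : {perm V}) (B : {set V}) : (g * h) @: B = h @: (g @: B).
Proof. by rewrite -imset_comp; apply: eq_imset => x; rewrite permM. Qed.

Lemma imsetK (g : {perm V}) (B : {set V}) : g^-1 @: (g @: B) = B.
Proof.
by rewrite -imsetM mulgV (eq_imset _ (@perm1 _)) imset_id.
Qed.

Lemma sumE u (C : {set V}) : #|nb u C| = \sum_(v in C) e u v.
Proof.
rewrite /nb -sum1dep_card big_mkcondr /=; apply: eq_bigr => v _.
by case: (e u v).
Qed.

Lemma dbl x y : #|nb x (Ob y)| = #|nb y (Ob x)|.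
Proof.
have S1 : \sum_(u in Ob x) #|nb u (Ob y)| = (#|N| * #|nb x (Ob y)|)%N.
  rewrite (eq_bigr (fun _ => #|nb x (Ob y)|)); last first.
    by move=> u Hu; apply: cnt_orb (orbs_Ob y) Hu.
  by rewrite sum_nat_const card_orb.
have S2 : \sum_(u in Ob y) #|nb u (Ob x)| = (#|N| * #|nb y (Ob x)|)%N.
  rewrite (eq_bigr (fun _ => #|nb y (Ob x)|)); last first.
    by move=> u Hu; apply: cnt_orb (orbs_Ob x) Hu.
  by rewrite sum_nat_const card_orb.
have : (#|N| * #|nb x (Ob y)|)%N = (#|N| * #|nb y (Ob x)|)%N.
  rewrite -S1 -S2.
  rewrite (eq_bigr (fun u => \sum_(v in Ob y) e u v)); last by move=> u _; rewrite sumE.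
  rewrite [RHS](eq_bigr (fun u => \sum_(v in Ob x) e u v)); last by move=> u _; rewrite sumE.
  rewrite exchange_big; apply: eq_bigr => v _; apply: eq_bigr => u _; by rewrite e_sym.
by move/eqP; rewrite eqn_pmul2l ?cardG_gt0 // => /eqP.
Qed.

Lemma case1_le1 a : 0 < #|nb a (Ob a)| -> forall x C, C \in orbs N -> #|nb x C| <= 1.
Proof.
move=> Ha x C HC.
have [C1 [C2 [[H1 H2 n12 n1 n2] [S P1 P2 R0]]]] := local x.
have c0 : 0 < #|nb x (Ob x)| by rewrite (cnt_self x a).
case: (eqVneq C (Ob x)) => [->|nx]; first by move: S P1 P2 c0; clear; lia.
case: (eqVneq C C1) => [->|nc1]; first by move: S P1 P2 c0; clear; lia.
case: (eqVneq C C2) => [->|nc2]; first by move: S P1 P2 c0; clear; lia.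
by rewrite R0.
Qed.

Lemma K_fix1 a k x y : 0 < #|nb a (Ob a)| -> k \in orbit_kernel G N -> k x = x -> e x y -> k y = y.
Proof.
move=> Ha Kk kx Hxy.
apply: (le1_eq (case1_le1 Ha x (orbs_Ob y))); rewrite inE.
  by rewrite K_orb // -{1}kx e_aut // K_G.
by rewrite orb_self.
Qed.

Variable a : V.
Hypothesis H0 : #|nb a (Ob a)| = 0.

Lemma D2 x : exists C, [/\ C \in orbs N, #|nb x C| = 2 &
  forall C', C' \in orbs N -> C' != C -> #|nb x C'| <= 1].
Proof.
have [C1 [C2 [[H1 H2 n12 n1 n2] [S P1 P2 R0]]]] := local x.
have c0 : #|nb x (Ob x)| = 0 by rewrite (cnt_self x a).
have [c1|c1] : #|nb x C1| = 2 \/ #|nb x C1| = 1%N by move: S P1 P2 c0; clear; lia.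
- exists C1; split => // C' HC' ne.
  case: (eqVneq C' (Ob x)) => [->|nx]; first by rewrite c0.
  case: (eqVneq C' C2) => [->|nc2]; first by move: S P1 P2 c0 c1; clear; lia.
  by rewrite R0.
- exists C2; split => //; first by move: S P1 P2 c0 c1; clear; lia.
  move=> C' HC' ne.
  case: (eqVneq C' (Ob x)) => [->|nx]; first by rewrite c0.
  case: (eqVneq C' C1) => [->|nc1]; first by rewrite c1.
  by rewrite R0.
Qed.

Definition pi (B : {set V}) : {set V} :=
  odflt set0 [pick C in orbs N | [exists x in B, #|nb x C| == 2]].

Lemma pi_spec (B : {set V}) x : B \in orbs N -> x \in B -> pi B \in orbs N /\ #|nb x (pi B)| = 2.
Proof.
move=> HB Hx; rewrite /pi; case: pickP => [C /andP [HC /existsP [y /andP [Hy /eqP Hc]]] | H] /=.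
  split => //; rewrite -Hc; apply: cnt_orb => //.
  by rewrite -(orbs_eq HB Hy).
exfalso; have [C [HC Hc _]] := D2 x.
have Hex : [exists x0 in B, #|nb x0 C| == 2].
  by apply/existsP; exists x; rewrite Hx Hc.
by have := H C; rewrite HC Hex.
Qed.

Lemma pi_orbs B : B \in orbs N -> pi B \in orbs N.
Proof. by case/orbsP => b ->; case: (pi_spec (orbs_Ob b) (orb_self b)). Qed.

Lemma pi_uniq (B : {set V}) x C : B \in orbs N -> x \in B -> C \in orbs N -> #|nb x C| = 2 -> C = pi B.
Proof.
move=> HB Hx HC Hc; have [C0 [HC0 Hc0 Hle]] := D2 x.
have [Hp Hpc] := pi_spec HB Hx.
case: (eqVneq C C0) => [->|ne]; last by have := Hle _ HC ne; rewrite Hc.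
case: (eqVneq (pi B) C0) => [->//|ne]; by have := Hle _ Hp ne; rewrite Hpc.
Qed.

Lemma pi_neq B : B \in orbs N -> pi B != B.
Proof.
move=> HB; case/orbsP: (HB) => b Eb.
have Hb : b \in B by rewrite Eb orb_self.
have [_ Hc] := pi_spec HB Hb.
apply/eqP => E; rewrite E Eb (cnt_self b a) H0 in Hc; done.
Qed.

Lemma pi_inv B : B \in orbs N -> pi (pi B) = B.
Proof.
move=> HB; case/orbsP: (HB) => b Eb.
have Hb : b \in B by rewrite Eb orb_self.
have [Hp Hc] := pi_spec HB Hb.
have /card_gt0P [y Hy] : 0 < #|nb b (pi B)| by rewrite Hc.
move: Hy; rewrite inE => /andP [Hy Hby].
have Ep := orbs_eq Hp Hy.
apply/esym/(pi_uniq Hp Hy HB).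
by rewrite Eb dbl -Ep.
Qed.

Definition bp (B : {set V}) : V * V :=
  odflt (a, a) [pick p : V * V | [&& p.1 \in B, p.2 \in pi B & e p.1 p.2]].

Lemma bp_spec B : B \in orbs N -> [/\ (bp B).1 \in B, (bp B).2 \in pi B & e (bp B).1 (bp B).2].
Proof.
move=> HB; rewrite /bp; case: pickP => [p /and3P [H1 H2 H3] | H] /=; first by split.
exfalso; case/orbsP: (HB) => b Eb.
have Hb : b \in B by rewrite Eb orb_self.
have [Hp Hc] := pi_spec HB Hb.
have /card_gt0P [y Hy] : 0 < #|nb b (pi B)| by rewrite Hc.
move: Hy; rewrite inE => /andP [Hy Hby].
by have := H (b, y); rewrite /= Hb Hy Hby.
Qed.

Definition inT (B : {set V}) x y :=
  [exists n in N, (x == n (bp B).1) && (y == n (bp B).2)].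

Definition pres (B : {set V}) (g : {perm V}) := inT B (g (bp B).1) (g (bp B).2).

Lemma inT_prop B x y : B \in orbs N -> inT B x y -> [/\ x \in B, y \in pi B & e x y].
Proof.
move=> HB /existsP [n /and3P [Hn /eqP -> /eqP ->]].
case: (bp_spec HB) => H1 H2 H3.
by rewrite !orbs_memN ?pi_orbs // e_aut ?NinG.
Qed.

Lemma inT_uniq2 B x y y' : inT B x y -> inT B x y' -> y = y'.
Proof.
move=> /existsP [n /and3P [Hn /eqP Ex /eqP ->]] /existsP [m /and3P [Hm /eqP Ex' /eqP ->]].
by rewrite (semireg Hn Hm (etrans (esym Ex) Ex')).
Qed.

Lemma inT_uniq1 B x x' y : inT B x y -> inT B x' y -> x = x'.
Proof.
move=> /existsP [n /and3P [Hn /eqP -> /eqP Ey]] /existsP [m /and3P [Hm /eqP -> /eqP Ey']].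
by rewrite (semireg Hn Hm (etrans (esym Ey) Ey')).
Qed.

Lemma inT_ex1 B x : B \in orbs N -> x \in B -> exists y, inT B x y.
Proof.
move=> HB Hx; case: (bp_spec HB) => H1 _ _.
have /orbitP [n Hn] : x \in Ob (bp B).1 by rewrite -(orbs_eq HB H1).
rewrite /= apermE => <-.
by exists (n (bp B).2); apply/existsP; exists n; rewrite Hn !eqxx.
Qed.

Lemma inT_ex2 B y : B \in orbs N -> y \in pi B -> exists x, inT B x y.
Proof.
move=> HB Hy; case: (bp_spec HB) => _ H2 _.
have /orbitP [n Hn] : y \in Ob (bp B).2 by rewrite -(orbs_eq (pi_orbs HB) H2).
rewrite /= apermE => <-.
by exists (n (bp B).1); apply/existsP; exists n; rewrite Hn !eqxx.
Qed.

Lemma inT_N B n x y : n \in N -> inT B x y -> inT B (n x) (n y).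
Proof.
move=> Hn /existsP [m /and3P [Hm /eqP -> /eqP ->]].
by apply/existsP; exists (m * n); rewrite groupM // !permM !eqxx.
Qed.

Lemma inT_NE B n x y : n \in N -> inT B (n x) (n y) = inT B x y.
Proof.
move=> Hn; apply/idP/idP; last exact: inT_N.
by move/(inT_N (groupVr Hn)); rewrite !permK.
Qed.

Local Notation K := (orbit_kernel G N).

Lemma nb_K g x y (C : {set V}) : g \in K -> C \in orbs N -> y \in nb x C -> g y \in nb (g x) C.
Proof.
move=> Kg HC; rewrite !inE => /andP [Hy Hxy].
by rewrite K_mem // Hy e_aut ?K_G.
Qed.

Lemma inT_K g B x y : g \in K -> B \in orbs N -> x \in B -> y \in pi B -> e x y ->
  inT B (g x) (g y) = (inT B x y == pres B g).
Proof.
move=> Kg HB Hx Hy Hxy.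
case: (bp_spec HB) => Hu0 Hw0 Huw.
have /orbitP [n Hn] : x \in Ob (bp B).1 by rewrite -(orbs_eq HB Hu0).
rewrite /= apermE => Ex.
have Gg := K_G Kg.
have T1 : inT B x (n (bp B).2) by apply/existsP; exists n; rewrite Hn Ex !eqxx.
have E1 : inT B (g x) (g (n (bp B).2)) = pres B g.
  by rewrite -Ex -(permJ n g (bp B).1) -(permJ n g (bp B).2) inT_NE // conjN.
case: (eqVneq y (n (bp B).2)) => [->|ne]; first by rewrite T1 E1; case: (pres B g).
have F : inT B x y = false.
  by apply/negbTE/negP => T; move: ne; rewrite (inT_uniq2 T T1) eqxx.
rewrite F.
have HpB := pi_orbs HB.
have gxB : g x \in B by rewrite K_mem.
have [z Tz] := inT_ex1 HB gxB.
have [_ Hz Hgxz] := inT_prop HB Tz.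
have Hz' : z \in nb (g x) (pi B) by rewrite inE Hz Hgxz.
have Hgy : g y \in nb (g x) (pi B) by apply: nb_K => //; rewrite inE Hy Hxy.
have [_ Hy1 Hxy1] := inT_prop HB T1.
have Hgy1 : g (n (bp B).2) \in nb (g x) (pi B) by apply: nb_K => //; rewrite inE Hy1 Hxy1.
have ne' : g y != g (n (bp B).2) by rewrite (inj_eq perm_inj).
have [_ c2] := pi_spec HB gxB.
case/orP: (two_elems c2 Hgy Hgy1 ne' Hz') => /eqP Ez.
- rewrite -Ez Tz; move: E1; case: (pres B g) => // T'.
  by move: ne'; rewrite -(inT_uniq2 Tz T') Ez eqxx.
- rewrite -E1; rewrite Ez in Tz; rewrite Tz /=; apply/negbTE/negP => T'.
  by move: ne'; rewrite (inT_uniq2 T' Tz) eqxx.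
Qed.

Lemma pres_mul g h B : g \in K -> h \in K -> B \in orbs N ->
  pres B (g * h) = (pres B g == pres B h).
Proof.
move=> Kg Kh HB; rewrite /pres !permM.
case: (bp_spec HB) => H1 H2 H3.
rewrite inT_K // ?K_mem ?pi_orbs // e_aut // K_G //.
Qed.

Lemma pres_1 B : pres B 1.
Proof. by rewrite /pres !perm1; apply/existsP; exists 1; rewrite group1 !perm1 !eqxx. Qed.

Lemma pres_V g B : g \in K -> B \in orbs N -> pres B g^-1 = pres B g.
Proof.
move=> Kg HB; have KgV : g^-1 \in K by rewrite /orbit_kernel groupV.
have := pres_mul KgV Kg HB; rewrite mulVg pres_1.
by case: (pres B g^-1); case: (pres B g).
Qed.

Lemma fixF g B v y : g \in K -> B \in orbs N -> pres B g -> v \in B -> g v = v ->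
  y \in nb v (pi B) -> g y = y.
Proof.
move=> Kg HB Pg Hv gv Hy.
have [z Tz] := inT_ex1 HB Hv.
have [_ Hz Hvz] := inT_prop HB Tz.
have gz : g z = z.
  have T' : inT B v (g z) by rewrite -{1}gv inT_K // Tz Pg.
  exact/esym/(inT_uniq2 Tz T').
case: (eqVneq y z) => [->//|ne].
move: (Hy); rewrite inE => /andP [Hy1 Hvy].
have F : inT B v y = false by apply/negbTE/negP => T; move: ne; rewrite (inT_uniq2 T Tz) eqxx.
have F' : inT B v (g y) = false by rewrite -{1}gv inT_K // F Pg.
have Hgy : g y \in nb v (pi B) by rewrite -{1}gv; apply: nb_K => //; exact: pi_orbs.
have [_ c2] := pi_spec HB Hv.
have Hz' : z \in nb v (pi B) by rewrite inE Hz Hvz.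
have nzy : z != y by rewrite eq_sym.
case/orP: (two_elems c2 Hz' Hy nzy Hgy) => /eqP // E.
by rewrite E Tz in F'.
Qed.

Lemma fixF' g B w x : g \in K -> B \in orbs N -> pres B g -> w \in pi B -> g w = w ->
  x \in nb w B -> g x = x.
Proof.
move=> Kg HB Pg Hw gw Hx.
have [z Tz] := inT_ex2 HB Hw.
have [Hz _ Hzw] := inT_prop HB Tz.
have gz : g z = z.
  have T' : inT B (g z) w by rewrite -{1}gw inT_K // Tz Pg.
  exact/esym/(inT_uniq1 Tz T').
case: (eqVneq x z) => [->//|ne].
move: (Hx); rewrite inE => /andP [Hx1 Hwx].
have F : inT B x w = false by apply/negbTE/negP => T; move: ne; rewrite (inT_uniq1 T Tz) eqxx.
have F' : inT B (g x) w = false by rewrite -{1}gw inT_K // ?F ?Pg // e_sym.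
have Hgx : g x \in nb w B by rewrite -{1}gw; apply: nb_K.
have HpB := pi_orbs HB.
have [_ c2] := pi_spec HpB Hw; rewrite pi_inv // in c2.
have Hz' : z \in nb w B by rewrite inE Hz e_sym Hzw.
have nzx : z != x by rewrite eq_sym.
case/orP: (two_elems c2 Hz' Hx nzx Hgx) => /eqP // E.
by rewrite E Tz in F'.
Qed.

Definition Rset := [set B in orbs N | enum_rank B < enum_rank (pi B)].

Lemma R_or B : B \in orbs N -> (B \in Rset) || (pi B \in Rset).
Proof.
move=> HB; rewrite !inE HB pi_orbs // pi_inv //=.
have : enum_rank B != enum_rank (pi B).
  by apply/eqP => /enum_rank_inj E; move: (pi_neq HB); rewrite -E eqxx.
by rewrite neq_ltn.
Qed.

Lemma card_R : #|orbs N| = (#|Rset|).*2.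
Proof.
have E : orbs N = Rset :|: pi @: Rset.
  apply/setP => B; rewrite in_setU; apply/idP/idP.
    move=> HB; case/orP: (R_or HB) => H; first by rewrite H.
    by apply/orP; right; apply/imsetP; exists (pi B) => //; rewrite pi_inv.
  case/orP; first by rewrite inE; case/andP.
  by case/imsetP => B' HB' ->; apply: pi_orbs; case/setIdP: HB'.
have D : Rset :&: pi @: Rset = set0.
  apply/setP => B; rewrite !inE; apply/negP => /andP [/andP [HB Hr] /imsetP [B' HB' EB]].
  move: HB'; rewrite inE => /andP [HB' Hr'].
  by move: Hr Hr'; rewrite EB pi_inv // => h1 h2; have := ltn_trans h1 h2; rewrite ltnn.
rewrite E cardsU D cards0 subn0 card_in_imset ?addnn //.
move=> B1 B2; rewrite !inE => /andP [H1 _] /andP [H2 _] Ep.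
by rewrite -(pi_inv H1) Ep pi_inv.
Qed.

Lemma KT g : g \in K -> g a = a -> (forall B, B \in Rset -> pres B g) -> g = 1.
Proof.
move=> Kg ga HR; apply: (fixall _ ga) => v y gv Hvy.
have Hv := orbs_Ob v.
case: (eqVneq (Ob y) (pi (Ob v))) => [Ey|ne].
  have Hy : y \in nb v (pi (Ob v)) by rewrite inE -Ey orb_self Hvy.
  case/orP: (R_or Hv) => H.
    exact: (fixF Kg Hv (HR _ H) (orb_self v) gv Hy).
  apply: (fixF' Kg (pi_orbs Hv) (HR _ H) _ gv); first by rewrite pi_inv // orb_self.
  exact: Hy.
have [C0 [HC0 Hc0 Hle]] := D2 v.
have E0 : C0 = pi (Ob v) := pi_uniq Hv (orb_self v) HC0 Hc0.
have Hle1 : #|nb v (Ob y)| <= 1 by apply: Hle; rewrite ?orbs_Ob // E0.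
apply: (le1_eq Hle1); last by rewrite inE orb_self.
by rewrite -{1}gv; apply: nb_K => //; rewrite ?orbs_Ob // inE orb_self.
Qed.

Definition fR (k : {perm V}) := [set B in Rset | pres B k].

Lemma in_fR B k : (B \in fR k) = (B \in Rset) && pres B k.
Proof. by rewrite /fR !inE. Qed.

Lemma case2_main : [/\ ~~ odd r, 'C_G[a | 'P] = 'C_K[a | 'P],
  2.-abelem 'C_G[a | 'P] & #|'C_G[a | 'P]| <= 2 ^ r./2].
Proof.
have Er : r = (#|Rset|).*2 by case: Hcyc => <- _ _; exact: card_R.
have Gsub : forall g, g \in 'C_G[a | 'P] -> g \in K.
  move=> g /inStab [Hg ga]; apply/inK; split => //.
  have HB0 := orbs_Ob a.
  have gB0 : g @: Ob a = Ob a by rewrite orb_img // ga.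
  apply: (propag Hg HB0 gB0) => C AC.
  have [Hp Hc] := pi_spec HB0 (orb_self a).
  have Ap : adj (Ob a) (pi (Ob a)).
    by apply: adj_of_cnt => //; [exact: pi_neq | rewrite Hc].
  have gp : g @: pi (Ob a) = pi (Ob a).
    apply: (pi_uniq HB0 (orb_self a) (orbs_img Hg Hp)).
    by rewrite -{1}ga cnt_img.
  have XS : pi (Ob a) \in [set C | adj (Ob a) C] by rewrite inE.
  have fS : {in [set C | adj (Ob a) C], forall Y : {set V}, g @: Y \in [set C | adj (Ob a) C]}.
    by move=> Y; rewrite !inE => AY; rewrite -{1}gB0; apply: adj_img.
  have H := @two_fix _ _ (fun C0 : {set V} => g @: C0) _ (adj2 HB0) XS gp fS (imset_inj (@perm_inj _ g)).
  by apply: (H C); rewrite inE.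
have EK : 'C_G[a | 'P] = 'C_K[a | 'P].
  apply/eqP; rewrite eqEsubset; apply/andP; split; apply/subsetP => g Hg.
    apply/inStab; split; first exact: Gsub.
    by case/inStab: Hg.
  case/inStab: Hg => Kg ga; apply/inStab; split => //; exact: K_G.
have Inj : {in 'C_G[a | 'P] &, injective fR}.
  move=> k l Hk Hl E.
  have Kk := Gsub _ Hk; have Kl := Gsub _ Hl.
  case/inStab: Hk => _ ka; case/inStab: Hl => _ la.
  have Kh : k^-1 * l \in K by rewrite /orbit_kernel groupM // groupV.
  have ha : (k^-1 * l) a = a by rewrite permM -{1}ka permK la.
  have h1 : k^-1 * l = 1.
    apply: (KT Kh ha) => B HB.
    have HBo : B \in orbs N by case/setIdP: HB.
    rewrite pres_mul ?pres_V //; last by rewrite /orbit_kernel groupV.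
    have := congr1 (fun S : {set {set V}} => B \in S) E; rewrite /= !in_fR HB /= => ->.
    by rewrite eqxx.
  by rewrite -(mulKVg k l) h1 mulg1.
split => //.
- by rewrite Er odd_double.
- apply/abelemP => //; split.
    apply/centsP => x Hx y Hy; apply: Inj; rewrite ?groupM //.
    apply/setP => B; rewrite !in_fR; case HB: (B \in Rset) => //=.
    have HBo : B \in orbs N by case/setIdP: HB.
    by rewrite !pres_mul ?Gsub // eq_sym.
  move=> x Hx; rewrite expgS expg1; apply: Inj; rewrite ?groupM ?group1 //.
  apply/setP => B; rewrite !in_fR; case HB: (B \in Rset) => //=.
  have HBo : B \in orbs N by case/setIdP: HB.
  by rewrite !pres_mul ?Gsub // eqxx pres_1.
- rewrite Er doubleK -card_powerset -(card_in_imset Inj).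
  apply: subset_leq_card; apply/subsetP => S /imsetP [k Hk ->].
  rewrite powersetE; apply/subsetP => B; rewrite in_fR => /andP [] //.
Qed.


Lemma case1_main : 0 < #|nb a (Ob a)| -> 'C_G[a | 'P] != 1 ->
  #|'C_G[a | 'P]| = 2 /\ 'C_K[a | 'P] = 1.
Proof.
move=> Ha Hnt.
have K1 : 'C_K[a | 'P] = 1.
  apply/setP => k; rewrite [in RHS]inE; apply/idP/eqP => [Hk|->].
    case/inStab: Hk => Kk ka.
    apply: (fixall _ ka) => x y kx Hxy; exact: K_fix1 Ha Kk kx Hxy.
  by apply/inStab; split; [rewrite /orbit_kernel group1 | rewrite perm1].
split => //.
have HB0 := orbs_Ob a.
have /card_gt0P [C1 HC1] : 0 < #|[set C | adj (Ob a) C]| by rewrite adj2.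
have Inj : {in 'C_G[a | 'P] &, injective (fun g : {perm V} => g @: C1)}.
  move=> g h Hg Hh /= E.
  have Hk : h * g^-1 \in 'C_G[a | 'P] by rewrite groupM ?groupV.
  case/inStab: (Hk) => Gk ka.
  have kC1 : (h * g^-1) @: C1 = C1 by rewrite imsetM -E imsetK.
  have kB0 : (h * g^-1) @: Ob a = Ob a by rewrite orb_img // ka.
  have fS : {in [set C | adj (Ob a) C], forall Y : {set V},
       (h * g^-1) @: Y \in [set C | adj (Ob a) C]}.
    by move=> Y; rewrite !inE => AY; rewrite -{1}kB0; apply: adj_img.
  have Kk : h * g^-1 \in K.
    apply/inK; split => //; apply: (propag Gk HB0 kB0) => C AC.
    have H := @two_fix _ _ (fun C0 : {set V} => (h * g^-1) @: C0) _ (adj2 HB0) HC1 kC1 fS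
       (imset_inj (@perm_inj _ _)).
    by apply: (H C); rewrite inE.
  have : h * g^-1 \in 'C_K[a | 'P] by apply/inStab.
  rewrite K1 inE => /eqP k1.
  by apply/esym/eqP; rewrite eq_mulgV1 k1.
apply/anti_leq/andP; split; last by rewrite cardG_gt1.
rewrite -(card_in_imset Inj) -(adj2 HB0); apply: subset_leq_card.
apply/subsetP => S /imsetP [g Hg ->]; rewrite inE.
case/inStab: Hg => Gg ga.
have gB : g @: Ob a = Ob a by rewrite orb_img // ga.
rewrite -[X in adj X _]gB.
by apply: adj_img => //; rewrite inE in HC1.
Qed.

End Basics.

Theorem lemma2p3 (V : finType) (e : rel V) (alpha : V) (G N : {group {perm V}})
  (r : nat) :
  simple_graph e -> graph_connected e -> cubic e ->
  G \subset Aut_graph e ->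
  [transitive G, on [set: V] | 'P] ->
  N <| G ->
  (forall x : V, 'C_N[x | 'P] = 1) ->
  2.-group 'C_G[alpha | 'P] -> 'C_G[alpha | 'P] != 1 ->
  3 <= r -> quotient_is_cycle e N r ->
  (#|'C_G[alpha | 'P]| = 2 /\ 'C_(orbit_kernel G N)[alpha | 'P] = 1)
  \/
  [/\ ~~ odd r,
      'C_G[alpha | 'P] = 'C_(orbit_kernel G N)[alpha | 'P],
      2.-abelem 'C_G[alpha | 'P] &
      #|'C_G[alpha | 'P]| <= 2 ^ r./2].
Proof.
move=> Hs Hc Hcub HGA Htr HN Hsr Hp Hnt Hr Hcyc.
case: (posnP #|nb e alpha (orbit 'P N alpha)|) => [H0|Ha].
  by right; apply: (case2_main Hs HGA HN Hsr Hcyc Hc Hcub Htr H0).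
by left; apply: (case1_main Hs HGA HN Hsr Hcyc Hc Hcub Htr Ha Hnt).
Qed.
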